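(* Let $1\le\alpha_1\le\dots\le\alpha_r\le n$ and $p:=\gamma^{\alpha_1}\cdots\gamma^{\alpha_r}\in V$. Then for every $m\ge1$ and $i_1,\dots,i_m\in\{1,\dots,n\}$, $$\widehat{x^{i_1}}\cdots\widehat{x^{i_m}}\cdot p=\big(\widehat{x^{i_1}}\cdots\widehat{x^{i_m}}\cdot1\big)\,p .$$
   Context: Fix $n\ge1$ and an invertible complex matrix $\eta=(\eta^{ij})$ with $\eta^{ij}=\eta^{ji}$ and inverse $(\eta_{ij})$. $\mathcal{A}=W(2n|n)$ is the associative superalgebra generated by even $x^1,\dots,x^n,\partial_1,\dots,\partial_n$ and odd $\gamma^1,\dots,\gamma^n$ with relations $x^ix^j=x^jx^i$, $\partial_i\partial_j=\partial_j\partial_i$, $\partial_ix^j-x^j\partial_i=\delta_i^j$, $\gamma^i$ commuting with $x^j,\partial_j$, $\gamma^i\gamma^j+\gamma^j\gamma^i=2\eta^{ij}$. Repeated indices are summed; $x_i=\eta_{ij}x^j$, $\partial^i=\eta^{ij}\partial_j$. $\mathcal{A}$ acts on $V=\mathrm{Cl}(\eta)\otimes\mathbb{C}[x^1,\dots,x^n]$ ($x^i,\gamma^i$ by left multiplication, $\partial_i$ by $\partial/\partial x^i$). $X=\frac{\sqrt{-1}}{\sqrt2}\gamma^i\partial_i$, $H=-\frac12(\partial_ix^i+x^i\partial_i)$, $E=-\frac12\partial^i\partial_i$, $V^+=\{v\in V:Xv=0\}$. $I=\mathcal{A}X+\mathcal{A}E$, $Z_n=N_{\mathcal{A}}(I)/I$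 acting on $V^+$; $\widehat{x^i}\in Z_n$ is the class of $(H+1)x^i+\frac12\gamma^jx_j\gamma^i+\frac12x^jx_j\partial^i$. The product $(\cdot)\,p$ is right multiplication in $V$ by $p\in\mathrm{Cl}(\eta)$. *)

(* Defs.v *)
From HB Require Import structures.
From mathcomp Require Import all_boot all_algebra.
From mathcomp Require Import complex.
From mathcomp Require Import Rstruct.
From mathcomp Require Import mpoly.
From Stdlib Require Rdefinitions.

Set Implicit Arguments.
Unset Strict Implicit.
Unset Printing Implicit Defensive.
Import GRing.Theory.
Local Open Scope ring_scope.

Notation CC := (complex Rdefinitions.R).

(* Indices 1..n are represented by 'I_n (0-based). *)

Definition clifford_rel (n : nat) (eta : 'M[CC]_n) (B : algType CC)
    (b : 'I_n -> B) : Prop :=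
  forall i j : 'I_n, b i * b j + b j * b i = (2 * eta i j)%:A.

Definition is_clifford_algebra (n : nat) (eta : 'M[CC]_n) (C : algType CC)
    (g : 'I_n -> C) : Prop :=
  clifford_rel eta g /\
  forall (B : algType CC) (b : 'I_n -> B), clifford_rel eta b ->
    exists f : {lrmorphism C -> B},
      (forall i, f (g i) = b i) /\
      (forall f' : {lrmorphism C -> B}, (forall i, f' (g i) = b i) -> f' =1 f).

(* V = Cl(eta) (x) C[x^1,...,x^n] is realized as {mpoly C[n]} (polynomials in
   commuting variables x^i with coefficients in C; the x^i commute with C).
   x^i and gamma^i act by left multiplication, d_i by the formal partial
   derivative mderiv i, and right multiplication by p in Cl(eta) is
   v |-> v * p%:MP. *)
Section Ops.
Variables (n : nat) (eta : 'M[CC]_n) (C : algType CC) (g : 'I_n -> C).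

Definition sc (a : CC) (v : {mpoly C[n]}) : {mpoly C[n]} := (a%:A : C)%:MP * v.

Definition eta_low (i j : 'I_n) : CC := invmx eta i j.

Definition mul_xlow (j : 'I_n) (v : {mpoly C[n]}) : {mpoly C[n]} :=
  \sum_(k < n) sc (eta_low j k) ('X_k * v).

Definition d_up (i : 'I_n) (v : {mpoly C[n]}) : {mpoly C[n]} :=
  \sum_(j < n) sc (eta i j) (mderiv j v).

Definition Hop (v : {mpoly C[n]}) : {mpoly C[n]} :=
  sc (- 2^-1) (\sum_(i < n) (mderiv i ('X_i * v) + 'X_i * mderiv i v)).

Definition xhat (i : 'I_n) (v : {mpoly C[n]}) : {mpoly C[n]} :=
  Hop ('X_i * v) + 'X_i * v
  + sc (2^-1) (\sum_(j < n) (g j)%:MP * mul_xlow j ((g i)%:MP * v))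
  + sc (2^-1) (\sum_(j < n) 'X_j * mul_xlow j (d_up i v)).

(* xhat^{i_1} ... xhat^{i_m} . v  (xhat^{i_m} applied first) *)
Definition xhat_word (ws : seq 'I_n) (v : {mpoly C[n]}) : {mpoly C[n]} :=
  foldr xhat v ws.

End Ops.

(* Main.v *)
Require Import Defs.
From HB Require Import structures.
From mathcomp Require Import all_boot all_algebra.
From mathcomp Require Import complex.
From mathcomp Require Import Rstruct.
From mathcomp Require Import mpoly.
Import GRing.Theory.
Local Open Scope ring_scope.

Section R.
Variables (n : nat) (eta : 'M[CC]_n) (C : algType CC) (g : 'I_n -> C).
Implicit Types (v : {mpoly C[n]}) (c : C).

Lemma sc_r a v c : sc a (v * c%:MP) = sc a v * c%:MP.
Proof. by rewrite /sc mulrA. Qed.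

Lemma der_r i v c : mderiv i (v * c%:MP) = mderiv i v * c%:MP.
Proof. by rewrite mderivM mderivC mulr0 addr0. Qed.

Lemma xlow_r j v c : mul_xlow eta j (v * c%:MP) = mul_xlow eta j v * c%:MP.
Proof.
rewrite /mul_xlow mulr_suml; apply: eq_bigr => k _.
by rewrite mulrA sc_r.
Qed.

Lemma dup_r i v c : d_up eta i (v * c%:MP) = d_up eta i v * c%:MP.
Proof.
rewrite /d_up mulr_suml; apply: eq_bigr => k _.
by rewrite der_r sc_r.
Qed.

Lemma Hop_r v c : Hop (v * c%:MP) = Hop v * c%:MP.
Proof.
rewrite /Hop -sc_r mulr_suml; congr sc; apply: eq_bigr => k _.
by rewrite mulrDl mulrA der_r der_r mulrA.
Qed.

Lemma xhat_r i v c : xhat eta g i (v * c%:MP) = xhat eta g i v * c%:MP.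
Proof.
rewrite /xhat !mulrDl mulrA Hop_r -!sc_r !mulr_suml; congr (_ + _ + sc _ _ + sc _ _).
  by apply: eq_bigr => j _; rewrite mulrA xlow_r mulrA.
by apply: eq_bigr => j _; rewrite dup_r xlow_r mulrA.
Qed.

Lemma xhat_word_r ws v c :
  xhat_word eta g ws (v * c%:MP) = xhat_word eta g ws v * c%:MP.
Proof. by elim: ws => //= i ws ->; rewrite xhat_r. Qed.

End R.

Theorem corollary6p2 (n : nat) (eta : 'M[CC]_n)
    (C : algType CC) (g : 'I_n -> C) (alpha : seq 'I_n) (ws : seq 'I_n) :
  (1 <= n)%N ->
  eta^T = eta ->
  eta \in unitmx ->
  is_clifford_algebra eta g ->
  sorted (fun a b : 'I_n => (a <= b)%N) alpha ->
  (1 <= size ws)%N ->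
  let p : C := \prod_(a <- alpha) g a in
  xhat_word eta g ws p%:MP = xhat_word eta g ws 1 * p%:MP.
Proof.
move=> _ _ _ _ _ _ p.
by rewrite -xhat_word_r mul1r.
Qed.
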